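(* Let $0<H<1$, $1-H<\alpha<1$, and $z_1,z_2>0$. Put $$I=z_2^{2(H+\alpha-1)}+z_1^{2(H+\alpha-1)}+\frac{|z_2-z_1|^{2H}-z_1^{2H}-z_2^{2H}}{(z_1z_2)^{1-\alpha}}.$$ Then $I\le C(H,\alpha)|z_2-z_1|^{2(H+\alpha-1)}$, where $C(H,\alpha)$ depends only on $H$ and $\alpha$. *)

(* Defs.v *)
From Stdlib Require Import Reals.
Open Scope R_scope.

(* Real power x^y for x >= 0, with the convention 0^y = 0 (used only with y > 0).
   Stdlib's Rpower gives Rpower 0 y = 1, which is wrong for our purposes. *)
Definition rpow (x y : R) : R :=
  if Req_EM_T x 0 then 0 else Rpower x y.

Definition Iq (H alpha z1 z2 : R) : R :=
  rpow z2 (2 * (H + alpha - 1)) + rpow z1 (2 * (H + alpha - 1))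
  + (rpow (Rabs (z2 - z1)) (2 * H) - rpow z1 (2 * H) - rpow z2 (2 * H))
    / rpow (z1 * z2) (1 - alpha).

(* Main.v *)
Require Import Defs.
From Stdlib Require Import Reals Lra Psatz.
Open Scope R_scope.

Lemma rpow_pos_eq x y : 0 < x -> rpow x y = Rpower x y.
Proof. intros hx; unfold rpow; destruct (Req_EM_T x 0); [lra|reflexivity]. Qed.

Lemma Rpower_pos x y : 0 < Rpower x y.
Proof. unfold Rpower; apply exp_pos. Qed.


Lemma Iq_sym H alpha z1 z2 : Iq H alpha z1 z2 = Iq H alpha z2 z1.
Proof.
  unfold Iq. rewrite Rabs_minus_sym, (Rmult_comm z1 z2). unfold Rdiv. ring.
Qed.

Lemma divle x y c : 0 < c -> x <= y * c -> x / c <= y.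
Proof.
  intros hc h. apply Rmult_le_reg_r with c; [exact hc|].
  unfold Rdiv. rewrite Rmult_assoc, Rinv_l, Rmult_1_r; lra.
Qed.

Lemma main H alpha a b (hH0 : 0 < H) (hH1 : H < 1)
  (ha0 : 1 - H < alpha) (ha1 : alpha < 1) : 0 < a -> a < b ->
  Iq H alpha a b <= 8 * rpow (Rabs (b - a)) (2 * (H + alpha - 1)).
Proof.
  intros ha hab.
  set (be := H + alpha - 1). set (ga := 1 - alpha).
  assert (hbe : 0 < be) by (unfold be; lra).
  assert (hga : 0 < ga) by (unfold ga; lra).
  set (d := b - a).
  assert (hd : 0 < d) by (unfold d; lra).
  assert (hb : 0 < b) by lra.
  unfold Iq. fold be.
  rewrite Rabs_right by lra. fold d.
  assert (e2H : 2 * H = 2 * be + (ga + ga)) by (unfold be, ga; lra).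
  rewrite e2H, !(rpow_pos_eq d), !(rpow_pos_eq a), !(rpow_pos_eq b),
    (rpow_pos_eq (a*b)) by nra.
  fold ga.
  rewrite !Rpower_plus, <- Rpower_mult_distr by lra.
  set (A := Rpower a (2*be)). set (B := Rpower b (2*be)). set (D := Rpower d (2*be)).
  set (Ag := Rpower a ga). set (Bg := Rpower b ga). set (Dg := Rpower d ga).
  assert (pA : 0 < A) by apply Rpower_pos.
  assert (pB : 0 < B) by apply Rpower_pos.
  assert (pD : 0 < D) by apply Rpower_pos.
  assert (pAg : 0 < Ag) by apply Rpower_pos.
  assert (pBg : 0 < Bg) by apply Rpower_pos.
  assert (pDg : 0 < Dg) by apply Rpower_pos.
  assert (AB : A <= B) by (apply Rle_Rpower_l; lra).
  assert (AgBg : Ag <= Bg) by (apply Rle_Rpower_l; lra).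
  assert (DB : D <= B) by (apply Rle_Rpower_l; unfold d; lra).
  assert (DgBg : Dg <= Bg) by (apply Rle_Rpower_l; unfold d; lra).
  assert (key : (A + B) * (Ag * Bg) <= A * (Ag * Ag) + B * (Bg * Bg)).
  { assert (A * Ag <= B * Bg) by (apply Rmult_le_compat; lra).
    assert (A * Ag * (Bg - Ag) <= B * Bg * (Bg - Ag)) by (apply Rmult_le_compat_r; lra).
    nra. }
  assert (hAB : 0 < Ag * Bg) by nra.
  assert (E : forall X, B + A + (X - A * (Ag * Ag) - B * (Bg * Bg)) / (Ag * Bg)
      = X / (Ag * Bg) + ((A + B) * (Ag * Bg) - (A * (Ag * Ag) + B * (Bg * Bg))) / (Ag * Bg)).
  { intros X. field. lra. }
  assert (Eneg : ((A + B) * (Ag * Bg) - (A * (Ag * Ag) + B * (Bg * Bg))) / (Ag * Bg) <= 0).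
  { apply divle; lra. }
  rewrite E, Rabs_right, rpow_pos_eq by lra. fold D.
  destruct (Rle_or_lt d a) as [hda | hda].
  - assert (DgAg : Dg <= Ag) by (apply Rle_Rpower_l; lra).
    assert (Dg * Dg <= Ag * Bg) by (apply Rmult_le_compat; lra).
    assert (D * (Dg * Dg) / (Ag * Bg) <= D) by (apply divle; nra).
    lra.
  - assert (Dg * Dg <= Bg * Bg) by (apply Rmult_le_compat; lra).
    assert (D * (Dg * Dg) <= B * (Bg * Bg)) by (apply Rmult_le_compat; nra).
    assert (D * (Dg * Dg) / (Ag * Bg) <= B * (Bg * Bg) / (Ag * Bg)).
    { unfold Rdiv. apply Rmult_le_compat_r; [apply Rlt_le, Rinv_0_lt_compat|]; lra. }
    assert (B * (Bg * Bg) / (Ag * Bg) + ((A + B) * (Ag * Bg) - (A * (Ag * Ag) + B * (Bg * Bg))) / (Ag * Bg) = A + B - A * (Ag * Ag) / (Ag * Bg)) by (field; lra).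
    assert (0 <= A * (Ag * Ag) / (Ag * Bg)).
    { unfold Rdiv. apply Rmult_le_pos; [nra|apply Rlt_le, Rinv_0_lt_compat; lra]. }
    assert (B <= Rpower 2 (2*be) * D).
    { unfold B, D. rewrite Rpower_mult_distr by lra.
      apply Rle_Rpower_l; [unfold be; lra|]. split; [lra|]. unfold d in *. lra. }
    assert (Rpower 2 (2*be) <= Rpower 2 2).
    { apply Rle_Rpower; unfold be; lra. }
    assert (Rpower 2 2 = 4).
    { replace 2 with (INR 2) at 2 by (simpl; lra). rewrite Rpower_pow by lra. simpl; lra. }
    nra.
Qed.

Theorem lemmaA1 (H alpha : R) (hH0 : 0 < H) (hH1 : H < 1)
  (ha0 : 1 - H < alpha) (ha1 : alpha < 1) :
  exists C : R, forall z1 z2 : R, 0 < z1 -> 0 < z2 ->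
    Iq H alpha z1 z2 <= C * rpow (Rabs (z2 - z1)) (2 * (H + alpha - 1)).
Proof.
  exists 8. intros z1 z2 h1 h2.
  destruct (Rtotal_order z1 z2) as [h|[h|h]].
  - apply main; lra.
  - subst z2. unfold Iq. rewrite Rminus_diag, Rabs_R0.
    assert (r0 : forall y, rpow 0 y = 0).
    { intros y; unfold rpow; destruct (Req_EM_T 0 0); lra. }
    rewrite !r0, !(rpow_pos_eq z1) by lra. rewrite (rpow_pos_eq (z1*z1)) by nra.
    rewrite <- Rpower_mult_distr by lra.
    replace (2 * H) with (2 * (H + alpha - 1) + ((1 - alpha) + (1-alpha))) by lra.
    rewrite !Rpower_plus.
    assert (0 < Rpower z1 (1 - alpha)) by apply Rpower_pos.
    field_simplify; lra.
  - rewrite Iq_sym, Rabs_minus_sym. apply main; lra.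
Qed.
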